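(* Let $m\in A_n$ be a monomial with $\mathrm{mdeg}(m)=(\alpha,\beta)$. Then: (i) $g_+(m)$ and $g_-(m)$ commute if and only if $\alpha=\beta$; (ii) if $g_+(m)$ and $g_-(m)$ do not commute, then $\deg([g_+(m),g_-(m)])=\deg(g_+(m))+\deg(g_-(m))-2=:d$; (iii) in that case $$\deg\Big([g_+(m),g_-(m)]+2i\sum_{k=1}^n(\alpha_k^2-\beta_k^2)\,a^{(\alpha+\beta-e_k,\;\alpha+\beta-e_k)}\Big)<d,$$ where the summands with $\alpha_k+\beta_k=0$ vanish.
   Context: Fix $n\ge 1$. The Weyl algebra $A_n$ is the unital associative $\mathbb{C}$-algebra generated by $a_1,\dots,a_n,a_1^\dagger,\dots,a_n^\dagger$ subject to $[a_i,a_j^\dagger]=\delta_{ij}$ and $[a_i,a_j]=[a_i^\dagger,a_j^\dagger]=0$. For $\gamma=(\alpha,\beta)\in\mathbb N_0^{2n}$ set $a^{\gamma}=(a_1^\dagger)^{\alpha_1}\cdots(a_n^\dagger)^{\alpha_n}a_1^{\beta_1}\cdots a_n^{\beta_n}$; these form a $\mathbb C$-basis of $A_n$; $|\gamma|=\sum_j\alpha_j+\sum_j\beta_j$. For $0\neq g\in A_n$, $\deg(g)$ is the largest $|\gamma|$ such that $a^\gamma$ has nonzero coefficient in the expansion of $g$; $\deg(0)=-\infty$. A monomial is a finite product (in any order) of the generators $a_j,a_j^\dagger$; its multi-degree $\mathrm{mdeg}(m)=(\alpha,\beta)$ records the number $\alpha_j$ of factors $a_j^\dagger$ and $\beta_j$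 of factors $a_j$. The adjoint $\dagger$ is the conjugate-linear anti-automorphism with $(a_j)^\dagger=a_j^\dagger$, $(a_j^\dagger)^\dagger=a_j$, $1^\dagger=1$. $g_+(m)=i(m^\dagger+m)$, $g_-(m)=m^\dagger-m$. $e_k\in\mathbb N_0^n$ denotes the $k$-th unit vector. *)

(* Defs.v *)
From HB Require Import structures.
From mathcomp Require Import all_boot all_order all_algebra.
From mathcomp Require Import mpoly.
Set Implicit Arguments. Unset Strict Implicit. Unset Printing Implicit Defensive.
Import Order.TTheory GRing.Theory Num.Theory.
Local Open Scope ring_scope.

(* The Weyl algebra A_n over C is modelled by its normal-ordered basis:
   an element g is stored as its coefficient vector w.r.t. the basis
   a^(alpha,beta) = (a_1^+)^alpha_1 ... (a_n^+)^alpha_n a_1^beta_1 ... a_n^beta_n.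
   The underlying C-vector space is {mpoly C[n + n]}: the basis vector a^(alpha,beta)
   is the mpoly monomial 'X_[m] where m (lshift j) = alpha_j, m (rshift j) = beta_j.
   The (noncommutative) Weyl product [wmul] is defined below via the
   normal-ordering formula; the commutative mpoly product is NOT the algebra
   product and is only used to assemble basis monomials of distinct modes. *)

Section Weyl.
Variable C : numClosedFieldType.
Variable n : nat.

Definition W := {mpoly C[n + n]}.

Definition mcr (u : 'X_{1..n + n}) (j : 'I_n) : nat := u (lshift n j).
Definition man (u : 'X_{1..n + n}) (j : 'I_n) : nat := u (rshift n j).

Definition nbasis (alpha beta : 'I_n -> nat) : W :=
  'X_[[multinom (match split i with inl j => alpha j | inr j => beta j end) | i < n + n]].

(* single mode: (a^+^a a^b)(a^+^c a^d) = sum_k C(b,k) C(c,k) k! a^+^(a+c-k) a^(b+d-k) *)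
Definition mono_mul (u v : 'X_{1..n + n}) : W :=
  \prod_(j < n)
    \sum_(k < (minn (man u j) (mcr v j)).+1)
      (('C(man u j, k) * 'C(mcr v j, k) * k`!)%:R : C) *:
        ('X_(lshift n j) ^+ (mcr u j + mcr v j - k) *
         'X_(rshift n j) ^+ (man u j + man v j - k)).

Definition wmul (p q : W) : W :=
  \sum_(u <- msupp p) \sum_(v <- msupp q) (p@_u * q@_v) *: mono_mul u v.

Definition wcomm (p q : W) : W := wmul p q - wmul q p.

(* degree: None stands for -oo (the zero element) *)
Definition wdeg (p : W) : option nat :=
  if p == 0 then None else Some (msize p).-1.

Definition wdeg_lt (p : W) (d : nat) : Prop :=
  match wdeg p with None => True | Some e => (e < d)%N end.

(* generators: Cr j = a_j^dagger, An j = a_j *)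
Inductive gen := Cr of 'I_n | An of 'I_n.

Definition gen_val (g : gen) : W :=
  match g with Cr j => 'X_(lshift n j) | An j => 'X_(rshift n j) end.

Definition word_val (m : seq gen) : W := foldr (fun g acc => wmul (gen_val g) acc) 1 m.

Definition mdeg_cr (m : seq gen) (j : 'I_n) : nat :=
  count (fun g => if g is Cr i then i == j else false) m.
Definition mdeg_an (m : seq gen) (j : 'I_n) : nat :=
  count (fun g => if g is An i then i == j else false) m.

(* the adjoint is a conjugate-linear anti-automorphism swapping a_j and a_j^dagger;
   on a monomial (coefficient 1) it reverses the word and swaps the letters *)
Definition gen_adj (g : gen) : gen :=
  match g with Cr j => An j | An j => Cr j end.
Definition word_adj (m : seq gen) : seq gen := rev (map gen_adj m).

Definition gplus (m : seq gen) : W := 'i *: (word_val (word_adj m) + word_val m).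
Definition gminus (m : seq gen) : W := word_val (word_adj m) - word_val m.

End Weyl.

(* Main.v *)
Require Import Defs.
From HB Require Import structures.
From mathcomp Require Import all_boot all_order all_algebra.
From mathcomp Require Import mpoly ssrcomplements.
From mathcomp Require Import zify ring.
Set Implicit Arguments. Unset Strict Implicit. Unset Printing Implicit Defensive.
Import Order.TTheory GRing.Theory Num.Theory.
Local Open Scope ring_scope.

Definition sp n (i : 'I_(n + n)) : 'I_n :=
  match split i with inl j => j | inr j => j end.
Lemma sp_l n (j : 'I_n) : sp (lshift n j) = j.
Proof. by rewrite /sp (unsplitK (inl j)). Qed.
Lemma sp_r n (j : 'I_n) : sp (rshift n j) = j.
Proof. by rewrite /sp (unsplitK (inr j)). Qed.

Definition cf n (u v : 'X_{1..n + n}) (f : 'I_n -> nat) : nat :=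
  \prod_(j < n) ('C(man u j, f j) * 'C(mcr v j, f j) * (f j)`!).
Definition EE n (u v : 'X_{1..n + n}) (f : 'I_n -> nat) : 'X_{1..n + n} :=
  [multinom (u i + v i - f (sp i))%N | i < n + n].
Definition KK n (u v : 'X_{1..n + n}) := (mdeg u + mdeg v).+2.

Lemma widen_sum (V : nmodType) (N M : nat) (F : nat -> V) : (N <= M)%N ->
  (forall k, (N <= k)%N -> (k < M)%N -> F k = 0) ->
  \sum_(k < N) F k = \sum_(k < M) F k.
Proof.
move=> le H; rewrite (big_ord_widen _ F le) big_mkcond /=.
apply eq_bigr => k _; case: ifP => // /negbT; rewrite -leqNgt => hk.
by rewrite H.
Qed.

Lemma man_le n (u : 'X_{1..n + n}) j : (man u j <= mdeg u)%N.
Proof.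
rewrite mdegE (bigD1 (rshift n j)) //= /man; exact: leq_addr.
Qed.
Lemma mcr_le n (u : 'X_{1..n + n}) j : (mcr u j <= mdeg u)%N.
Proof.
rewrite mdegE (bigD1 (lshift n j)) //= /mcr; exact: leq_addr.
Qed.

Lemma mono_mul_expand (C : numClosedFieldType) n (u v : 'X_{1..n + n}) K :
  (mdeg u + mdeg v <= K)%N ->
  mono_mul C u v = \sum_(f : {ffun 'I_n -> 'I_K.+2})
     (cf u v (fun j => f j))%:R *: 'X_[EE u v (fun j => f j)].
Proof.
move=> hK; rewrite /mono_mul.
pose G (j : 'I_n) (k : nat) : W C n :=
  (('C(man u j, k) * 'C(mcr v j, k) * k`!)%:R : C) *:
   'X_[U_(lshift n j) *+ (mcr u j + mcr v j - k) + U_(rshift n j) *+ (man u j + man v j - k)].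
have step1 : forall j : 'I_n, \sum_(k < (minn (man u j) (mcr v j)).+1)
   ((('C(man u j, k) * 'C(mcr v j, k) * k`!)%:R : C) *:
        ('X_(lshift n j) ^+ (mcr u j + mcr v j - k) *
         'X_(rshift n j) ^+ (man u j + man v j - k))) = \sum_(k < K.+2) G j k.
  move=> j; rewrite (eq_bigr (fun k : 'I_ _ => G j k)); last first.
    by move=> k _; rewrite /G !mpolyXn -mpolyXD.
  apply: (widen_sum (F := G j)).
    rewrite ltnS; apply: leq_trans (geq_minl _ _) _.
    apply: leq_trans (man_le u j) _; apply: leq_trans (leq_addr (mdeg v) _) _.
    by apply: leq_trans hK _.
  move=> k hk _; rewrite /G.
  have [h|h] := leqP k (man u j).
    have h2 : (mcr v j < k)%N.
      by move: hk; rewrite ltnNge leq_min h /= -ltnNge.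
    by rewrite (bin_small h2) muln0 mul0n scale0r.
  by rewrite (bin_small h) !mul0n scale0r.
rewrite (eq_bigr _ (fun j _ => step1 j)) bigA_distr_bigA /=.
apply: eq_bigr => f _; rewrite scaler_prod -natr_prod mprodXE /G.
congr (_ *: 'X_[_]).
apply/mnmP => i; rewrite mnm_sumE mnmE.
rewrite -[i]splitK; case: (split i) => j' /=.
- rewrite (bigD1 j') //= big1 ?addn0.
    by rewrite !mnmDE !mulmnE !mnm1E eq_lshift eqxx eq_rlshift sp_l /= mul1n mul0n addn0.
  move=> k hk; rewrite !mnmDE !mulmnE !mnm1E eq_lshift eq_rlshift (negbTE hk).
  by rewrite /= !mul0n.
- rewrite (bigD1 j') //= big1 ?addn0.
    by rewrite !mnmDE !mulmnE !mnm1E eq_rshift eqxx eq_lrshift sp_r /= mul1n mul0n.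
  move=> k hk; rewrite !mnmDE !mulmnE !mnm1E eq_rshift eq_lrshift (negbTE hk).
  by rewrite /= !mul0n.
Qed.

Definition ff n K (f : {ffun 'I_n -> 'I_K}) : 'I_n -> nat := fun j => nat_of_ord (f j).

Lemma coefE (C : numClosedFieldType) n (u v : 'X_{1..n + n}) K w :
  (mdeg u + mdeg v <= K)%N ->
  (mono_mul C u v)@_w = \sum_(f : {ffun 'I_n -> 'I_K.+2})
     (cf u v (ff f))%:R * (EE u v (ff f) == w)%:R.
Proof.
move=> hK; rewrite (mono_mul_expand C hK) raddf_sum; apply eq_bigr => f _.
by rewrite /= mcoeffZ mcoeffX.
Qed.

Lemma F1 n (u v : 'X_{1..n + n}) g : cf u v g != 0%N ->
  forall j, (g j <= man u j)%N /\ (g j <= mcr v j)%N.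
Proof.
move=> h j; move: h; rewrite /cf (bigD1 j) //= !muln_eq0 !negb_or -!lt0n !bin_gt0.
by case/andP => /andP [/andP [-> ->] _].
Qed.

Lemma EE_l n (u v : 'X_{1..n + n}) g j : mcr (EE u v g) j = (mcr u j + mcr v j - g j)%N.
Proof. by rewrite /mcr /EE mnmE sp_l. Qed.
Lemma EE_r n (u v : 'X_{1..n + n}) g j : man (EE u v g) j = (man u j + man v j - g j)%N.
Proof. by rewrite /man /EE mnmE sp_r. Qed.

Lemma mdeg_split n (u : 'X_{1..n + n}) :
  mdeg u = (\sum_(j < n) mcr u j + \sum_(j < n) man u j)%N.
Proof. by rewrite mdegE big_split_ord. Qed.

Lemma F2 n (u v : 'X_{1..n + n}) g :
  (forall j, (g j <= mcr u j + mcr v j)%N /\ (g j <= man u j + man v j)%N) ->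
  (mdeg (EE u v g) + 2 * \sum_(j < n) g j = mdeg u + mdeg v)%N.
Proof.
move=> h; rewrite !mdeg_split.
have e1 : (\sum_(j < n) mcr (EE u v g) j = \sum_(j < n) (mcr u j + mcr v j - g j))%N.
  by apply eq_bigr => j _; rewrite EE_l.
have e2 : (\sum_(j < n) man (EE u v g) j = \sum_(j < n) (man u j + man v j - g j))%N.
  by apply eq_bigr => j _; rewrite EE_r.
rewrite e1 e2.
have hA : (\sum_(j < n) (mcr u j + mcr v j - g j) + \sum_(j < n) g j =
           \sum_(j < n) mcr u j + \sum_(j < n) mcr v j)%N.
  rewrite -big_split -big_split /=; apply eq_bigr => j _.
  by rewrite subnK //; case: (h j).
have hB : (\sum_(j < n) (man u j + man v j - g j) + \sum_(j < n) g j =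
           \sum_(j < n) man u j + \sum_(j < n) man v j)%N.
  rewrite -big_split -big_split /=; apply eq_bigr => j _.
  by rewrite subnK //; case: (h j).
lia.
Qed.

Lemma F2' n (u v : 'X_{1..n + n}) g :
  cf u v g != 0%N \/ cf v u g != 0%N ->
  (mdeg (EE u v g) + 2 * \sum_(j < n) g j = mdeg u + mdeg v)%N.
Proof.
move=> h; apply: F2 => j; case: h => /F1 /(_ j) [h1 h2].
  by split; [apply: leq_trans h2 (leq_addl _ _) | apply: leq_trans h1 (leq_addr _ _)].
by split; [apply: leq_trans h2 (leq_addr _ _) | apply: leq_trans h1 (leq_addl _ _)].
Qed.

Definition f0 n K : {ffun 'I_n -> 'I_K.+1} := [ffun => ord0].

Lemma cf_f0 n (u v : 'X_{1..n + n}) K : cf u v (ff (f0 n K)) = 1%N.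
Proof. by rewrite /cf big1 // => j _; rewrite /ff ffunE !bin0. Qed.

Lemma EE_f0 n (u v : 'X_{1..n + n}) K : EE u v (ff (f0 n K)) = (u + v)%MM.
Proof. by apply/mnmP => i; rewrite /EE mnmE mnmDE /ff ffunE subn0. Qed.

Lemma sum0_f0 n K (f : {ffun 'I_n -> 'I_K.+1}) : (\sum_(j < n) ff f j = 0)%N -> f = f0 n K.
Proof.
move/eqP; rewrite sum_nat_eq0 => /forallP h; apply/ffunP => j.
by rewrite ffunE; apply/val_inj => /=; apply/eqP; exact: h j.
Qed.

Definition ord1K K : 'I_K.+2 := Ordinal (isT : (1 < K.+2)%N).
Definition dl n K (j : 'I_n) : {ffun 'I_n -> 'I_K.+2} :=
  [ffun i => if i == j then ord1K K else ord0].

Lemma sum1_dl n K (f : {ffun 'I_n -> 'I_K.+2}) : (\sum_(j < n) ff f j = 1)%N ->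
  exists j, f = dl K j.
Proof.
move=> h.
have [j hj] : exists j, (0 < ff f j)%N.
  apply/existsP; apply: contraT; rewrite negb_exists => /forallP h2.
  have : (\sum_(j < n) ff f j = 0)%N.
    by apply big1 => j _; move: (h2 j); rewrite -leqNgt leqn0 => /eqP.
  by rewrite h.
move: h; rewrite (bigD1 j) //= => h.
have e1 : ff f j = 1%N by lia.
have e2 : (\sum_(i < n | i != j) ff f i == 0)%N.
  by apply/eqP; move: h; rewrite e1 add1n => -[].
move: e2; rewrite sum_nat_eq0 => /forallP e2.
exists j; apply/ffunP => i; rewrite ffunE; apply/val_inj => /=.
case: eqP => [->|/eqP ne]; first exact: e1.
by apply/eqP; move: (e2 i); rewrite ne.
Qed.

Lemma cf_dl n (u v : 'X_{1..n + n}) K j :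
  cf u v (ff (dl K j)) = (man u j * mcr v j)%N.
Proof.
rewrite /cf (bigD1 j) //= big1 ?muln1.
  by rewrite /ff ffunE eqxx /= !bin1 muln1.
by move=> i hi; rewrite /ff ffunE (negbTE hi) /= !bin0.
Qed.

Definition DD n (j : 'I_n) (w : 'X_{1..n + n}) : 'X_{1..n + n} :=
  [multinom (w i - (sp i == j))%N | i < n + n].

Lemma EE_dl n (u v : 'X_{1..n + n}) K j :
  EE u v (ff (dl K j)) = DD j (u + v)%MM.
Proof.
apply/mnmP => i; rewrite /EE /DD !mnmE /ff ffunE.
by case: eqP.
Qed.

Lemma EE_sym n (u v : 'X_{1..n + n}) g : EE u v g = EE v u g.
Proof. by apply/mnmP => i; rewrite /EE !mnmE addnC. Qed.

Lemma mm_hb (C : numClosedFieldType) n (u v w : 'X_{1..n + n}) :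
  (mdeg u + mdeg v < mdeg w)%N -> (mono_mul C u v)@_w = 0.
Proof.
move=> h; rewrite (coefE C w (leqnn _)) big1 // => f _.
have [e|ne] := eqVneq (cf u v (ff f)) 0%N; first by rewrite e mul0r.
case: eqP => [E|]; last by rewrite mulr0.
exfalso; move: (F2' (or_introl ne)); rewrite E; lia.
Qed.

Lemma mm_top (C : numClosedFieldType) n (u v : 'X_{1..n + n}) :
  (mono_mul C u v)@_(u + v)%MM = 1.
Proof.
rewrite (coefE C _ (leqnn _)) (bigD1 (f0 n _)) //= cf_f0 EE_f0 eqxx mulr1.
rewrite big1 ?addr0 // => f hf.
have [e|ne] := eqVneq (cf u v (ff f)) 0%N; first by rewrite e mul0r.
case: eqP => [E|]; last by rewrite mulr0.
exfalso; move: (F2' (or_introl ne)); rewrite E mdegD => h.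
have : (\sum_(j < n) ff f j = 0)%N by lia.
by move/sum0_f0 => ef; rewrite ef eqxx in hf.
Qed.

Lemma mm_next (C : numClosedFieldType) n (u v w : 'X_{1..n + n}) :
  w != (u + v)%MM -> (mdeg u + mdeg v <= (mdeg w).+1)%N -> (mono_mul C u v)@_w = 0.
Proof.
move=> hw h; rewrite (coefE C w (leqnn _)) big1 // => f _.
have [e|ne] := eqVneq (cf u v (ff f)) 0%N; first by rewrite e mul0r.
case: eqP => [E|]; last by rewrite mulr0.
exfalso; move: (F2' (or_introl ne)); rewrite E => h2.
have : (\sum_(j < n) ff f j = 0)%N by lia.
by move/sum0_f0 => ef; move: E; rewrite ef EE_f0 => E; rewrite E eqxx in hw.
Qed.

Lemma mm_comm_low (C : numClosedFieldType) n (u v w : 'X_{1..n + n}) :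
  (mdeg u + mdeg v < (mdeg w).+2)%N -> (mono_mul C u v)@_w = (mono_mul C v u)@_w.
Proof.
move=> h.
have hK : (mdeg v + mdeg u <= mdeg u + mdeg v)%N by rewrite addnC.
rewrite (coefE C w (leqnn _)) (coefE C w hK); apply eq_bigr => f _.
rewrite (EE_sym v u); case: eqP => [E|]; last by rewrite !mulr0.
have key : (cf u v (ff f) != 0%N \/ cf v u (ff f) != 0%N) -> f = f0 n _.
  by move=> hc; move: (F2' hc); rewrite E => h2; apply: sum0_f0; lia.
have [e1|n1] := eqVneq (cf u v (ff f)) 0%N.
  have [e2|n2] := eqVneq (cf v u (ff f)) 0%N; first by rewrite e1 e2.
  by rewrite (key (or_intror n2)) !cf_f0.
by rewrite (key (or_introl n1)) !cf_f0.
Qed.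

Lemma dl_inj n K : injective (@dl n K).
Proof.
move=> i j /ffunP /(_ i); rewrite !ffunE eqxx; case: eqP => // _ /(congr1 val).
Qed.

Lemma mm_comm_top (C : numClosedFieldType) n (u v w : 'X_{1..n + n}) :
  (mdeg u + mdeg v <= (mdeg w).+2)%N ->
  (mono_mul C u v)@_w - (mono_mul C v u)@_w =
  \sum_(j < n) (DD j (u + v)%MM == w)%:R *
      ((man u j * mcr v j)%:R - (man v j * mcr u j)%:R).
Proof.
move=> h.
have hK : (mdeg v + mdeg u <= mdeg u + mdeg v)%N by rewrite addnC.
set K := (mdeg u + mdeg v)%N.
rewrite (coefE C w (leqnn K)) (coefE C w hK) -sumrB.
transitivity (\sum_(f : {ffun 'I_n -> 'I_K.+2})
   (((cf u v (ff f))%:R : C) - (cf v u (ff f))%:R) * (EE u v (ff f) == w)%:R).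
  by apply eq_bigr => f _; rewrite (EE_sym v u) mulrBl.
rewrite (bigID (fun f => f \in [set dl K j | j : 'I_n])) /= [X in _ + X]big1 ?addr0.
  rewrite big_imset /=; last by move=> i j _ _ /dl_inj.
  apply: eq_big => [j|j _] //.
  by rewrite !cf_dl EE_dl mulrC.
move=> f hf; case: eqP => [E|]; last by rewrite mulr0.
have [e1|n1] := eqVneq (cf u v (ff f)) 0%N.
  have [e2|n2] := eqVneq (cf v u (ff f)) 0%N; first by rewrite e1 e2 subrr mul0r.
  have hc : cf u v (ff f) != 0%N \/ cf v u (ff f) != 0%N by right.
  move: (F2' hc); rewrite E => h2.
  have [s0|s1] : (\sum_(j < n) ff f j = 0)%N \/ (\sum_(j < n) ff f j = 1)%N by lia.
    by rewrite (sum0_f0 s0) !cf_f0 subrr mul0r.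
  have [j ej] := sum1_dl s1; exfalso; move/negP: hf; apply; rewrite ej.
  by apply/imsetP; exists j.
have hc : cf u v (ff f) != 0%N \/ cf v u (ff f) != 0%N by left.
move: (F2' hc); rewrite E => h2.
have [s0|s1] : (\sum_(j < n) ff f j = 0)%N \/ (\sum_(j < n) ff f j = 1)%N by lia.
  by rewrite (sum0_f0 s0) !cf_f0 subrr mul0r.
have [j ej] := sum1_dl s1; exfalso; move/negP: hf; apply; rewrite ej.
by apply/imsetP; exists j.
Qed.

Lemma mm_charge (C : numClosedFieldType) n (u v w : 'X_{1..n + n}) :
  (mono_mul C u v)@_w != 0 ->
  forall j, (mcr w j + (man u j + man v j) = man w j + (mcr u j + mcr v j))%N.
Proof.
move=> hw j; apply/eqP; apply: contraR hw => hne; apply/eqP.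
rewrite (coefE C w (leqnn _)) big1 // => f _.
have [e|ne] := eqVneq (cf u v (ff f)) 0%N; first by rewrite e mul0r.
case: eqP => [E|]; last by rewrite mulr0.
exfalso; move/negP: hne; apply; apply/eqP.
have [h1 h2] := F1 ne j.
rewrite -E EE_l EE_r; move: h1 h2; rewrite /ff; lia.
Qed.

Lemma mm_diag_comm (C : numClosedFieldType) n (u v : 'X_{1..n + n}) :
  (forall j, mcr u j = man u j) -> (forall j, mcr v j = man v j) ->
  mono_mul C u v = mono_mul C v u.
Proof.
move=> hu hv; rewrite /mono_mul; apply eq_bigr => j _.
rewrite -!hu -!hv minnC; apply eq_bigr => k _.
by rewrite (mulnC 'C(mcr u j, k)) (addnC (mcr u j)).
Qed.

Lemma wmul_coef (C : numClosedFieldType) n (P Q : W C n) w :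
  (wmul P Q)@_w = \sum_(u <- msupp P) \sum_(v <- msupp Q)
      P@_u * Q@_v * (mono_mul C u v)@_w.
Proof.
rewrite /wmul raddf_sum; apply eq_bigr => u _; rewrite /= raddf_sum.
by apply eq_bigr => v _; rewrite /= mcoeffZ.
Qed.

Lemma wmulX (C : numClosedFieldType) n (a b : 'X_{1..n + n}) :
  wmul ('X_[a] : W C n) 'X_[b] = mono_mul C a b.
Proof. by rewrite /wmul !msuppX !big_seq1 !mcoeffX !eqxx mul1r scale1r. Qed.

Lemma wmulX_coef (C : numClosedFieldType) n (e : 'X_{1..n + n}) (P : W C n) w :
  (wmul 'X_[e] P)@_w = \sum_(v <- msupp P) P@_v * (mono_mul C e v)@_w.
Proof.
rewrite wmul_coef msuppX big_seq1; apply eq_bigr => v _.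
by rewrite mcoeffX eqxx /= mulr1n mul1r.
Qed.

Lemma sum_neq0 (C : numClosedFieldType) (I : eqType) (r : seq I) (F : I -> C) :
  \sum_(i <- r) F i != 0 -> exists2 i, i \in r & F i != 0.
Proof.
move=> h; case: (boolP (has (fun i => F i != 0) r)) => [/hasP [i hi hF]|/hasPn hn].
  by exists i.
by move: h; rewrite big1_seq ?eqxx // => i /andP [_ /hn /negPn /eqP].
Qed.

Definition hb (C : numClosedFieldType) n (P : W C n) (a : nat) :=
  forall w, (a < mdeg w)%N -> P@_w = 0.

Lemma supp_le (C : numClosedFieldType) n (P : W C n) a u :
  hb P a -> u \in msupp P -> (mdeg u <= a)%N.
Proof.
move=> hP hu; rewrite leqNgt; apply/negP => /hP e.
by move: hu; rewrite mcoeff_msupp e eqxx.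
Qed.

Lemma wcomm_low (C : numClosedFieldType) n (P Q : W C n) a b w :
  hb P a -> hb Q b -> (a + b < (mdeg w).+2)%N -> (wcomm P Q)@_w = 0.
Proof.
move=> hP hQ hab; rewrite /wcomm /W mcoeffB !wmul_coef [X in _ - X]exchange_big /=.
rewrite -sumrB big1_seq // => u /andP [_ hu]; rewrite -sumrB.
rewrite big1_seq // => v /andP [_ hv].
have h : (mdeg u + mdeg v < (mdeg w).+2)%N.
  exact: leq_ltn_trans (leq_add (supp_le hP hu) (supp_le hQ hv)) hab.
by rewrite (mm_comm_low C h) (mulrC Q@_v) subrr.
Qed.

Definition diag (C : numClosedFieldType) n (P : W C n) :=
  forall w, P@_w != 0 -> forall j, mcr w j = man w j.

Lemma wcomm_diag (C : numClosedFieldType) n (P Q : W C n) :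
  diag P -> diag Q -> wcomm P Q = 0.
Proof.
move=> hP hQ; apply/eqP; rewrite /wcomm subr_eq0; apply/eqP.
rewrite /wmul [RHS]exchange_big /=; apply eq_big_seq => u hu.
apply eq_big_seq => v hv.
rewrite mcoeff_msupp in hu; rewrite mcoeff_msupp in hv.
by rewrite (mm_diag_comm C (hP u hu) (hQ v hv)) mulrC.
Qed.

Lemma wmulE (C : numClosedFieldType) n (P Q : W C n) k :
  (msize P <= k)%N -> (msize Q <= k)%N ->
  wmul P Q = \sum_(u : 'X_{1..(n + n) < k}) \sum_(v : 'X_{1..(n + n) < k})
     (P@_u * Q@_v) *: mono_mul C u v.
Proof.
move=> hP hQ; pose I : subFinType _ := 'X_{1..(n + n) < k}.
rewrite /wmul (big_mksub I) /=; first last.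
- by move=> x /msize_mdeg_lt /leq_trans; apply.
- exact: msupp_uniq.
rewrite big_rmcond /= => [|u]; last first.
  by move/memN_msupp_eq0 => ->; rewrite big1 // => v _; rewrite mul0r scale0r.
apply eq_bigr => u _; rewrite (big_mksub I) /=; first last.
- by move=> x /msize_mdeg_lt /leq_trans; apply.
- exact: msupp_uniq.
rewrite big_rmcond //= => v.
by move/memN_msupp_eq0 => ->; rewrite mulr0 scale0r.
Qed.

Lemma wmulDl (C : numClosedFieldType) n (P1 P2 Q : W C n) :
  wmul (P1 + P2) Q = wmul P1 Q + wmul P2 Q.
Proof.
set k := (msize P1 + msize P2 + msize Q)%N.
have h1 : (msize P1 <= k)%N by rewrite /k; lia.
have h2 : (msize P2 <= k)%N by rewrite /k; lia.
have h3 : (msize Q <= k)%N by rewrite /k; lia.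
have h12 : (msize (P1 + P2) <= k)%N.
  by apply: leq_trans (msizeD_le _ _) _; rewrite geq_max h1 h2.
rewrite (wmulE h12 h3) (wmulE h1 h3) (wmulE h2 h3) -big_split; apply eq_bigr => u _.
rewrite -big_split; apply eq_bigr => v _.
by rewrite mcoeffD mulrDl scalerDl.
Qed.

Lemma wmulDr (C : numClosedFieldType) n (P Q1 Q2 : W C n) :
  wmul P (Q1 + Q2) = wmul P Q1 + wmul P Q2.
Proof.
set k := (msize Q1 + msize Q2 + msize P)%N.
have h1 : (msize Q1 <= k)%N by rewrite /k; lia.
have h2 : (msize Q2 <= k)%N by rewrite /k; lia.
have h3 : (msize P <= k)%N by rewrite /k; lia.
have h12 : (msize (Q1 + Q2) <= k)%N.
  by apply: leq_trans (msizeD_le _ _) _; rewrite geq_max h1 h2.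
rewrite (wmulE h3 h12) (wmulE h3 h1) (wmulE h3 h2) -big_split; apply eq_bigr => u _.
rewrite -big_split; apply eq_bigr => v _.
by rewrite mcoeffD mulrDr scalerDl.
Qed.

Lemma wmulZl (C : numClosedFieldType) n (c : C) (P Q : W C n) :
  wmul (c *: P) Q = c *: wmul P Q.
Proof.
set k := (msize P + msize Q)%N.
have h1 : (msize P <= k)%N by rewrite /k; lia.
have h3 : (msize Q <= k)%N by rewrite /k; lia.
have h12 : (msize (c *: P) <= k)%N by apply: leq_trans (msizeZ_le _ _) _.
rewrite (wmulE h12 h3) (wmulE h1 h3) scaler_sumr; apply eq_bigr => u _.
rewrite scaler_sumr; apply eq_bigr => v _.
by rewrite mcoeffZ scalerA mulrA.
Qed.

Lemma wmulZr (C : numClosedFieldType) n (c : C) (P Q : W C n) :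
  wmul P (c *: Q) = c *: wmul P Q.
Proof.
set k := (msize P + msize Q)%N.
have h1 : (msize P <= k)%N by rewrite /k; lia.
have h3 : (msize Q <= k)%N by rewrite /k; lia.
have h12 : (msize (c *: Q) <= k)%N by apply: leq_trans (msizeZ_le _ _) _.
rewrite (wmulE h1 h12) (wmulE h1 h3) scaler_sumr; apply eq_bigr => u _.
rewrite scaler_sumr; apply eq_bigr => v _.
by rewrite mcoeffZ scalerA mulrCA.
Qed.

Lemma wmulNl (C : numClosedFieldType) n (P Q : W C n) : wmul (- P) Q = - wmul P Q.
Proof. by rewrite -scaleN1r wmulZl scaleN1r. Qed.
Lemma wmulNr (C : numClosedFieldType) n (P Q : W C n) : wmul P (- Q) = - wmul P Q.
Proof. by rewrite -scaleN1r wmulZr scaleN1r. Qed.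

Lemma gcomm_eq (C : numClosedFieldType) n (A B : W C n) :
  wcomm ('i *: (A + B)) (A - B) = 'i *: ((wmul B A - wmul A B) *+ 2).
Proof.
rewrite /wcomm !(wmulZl, wmulZr, wmulDl, wmulDr, wmulNl, wmulNr).
rewrite -!mul_mpolyC; ring.
Qed.

Lemma wcommDl (C : numClosedFieldType) n (P1 P2 Q : W C n) :
  wcomm (P1 + P2) Q = wcomm P1 Q + wcomm P2 Q.
Proof. rewrite /wcomm wmulDl wmulDr; ring. Qed.
Lemma wcommDr (C : numClosedFieldType) n (P Q1 Q2 : W C n) :
  wcomm P (Q1 + Q2) = wcomm P Q1 + wcomm P Q2.
Proof. rewrite /wcomm wmulDl wmulDr; ring. Qed.

Definition gam n (a b : 'I_n -> nat) : 'X_{1..n + n} :=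
  [multinom (match split i with inl j => a j | inr j => b j end) | i < n + n].

Lemma gam_l n (a b : 'I_n -> nat) j : mcr (gam a b) j = a j.
Proof. by rewrite /mcr /gam mnmE (unsplitK (inl j)). Qed.
Lemma gam_r n (a b : 'I_n -> nat) j : man (gam a b) j = b j.
Proof. by rewrite /man /gam mnmE (unsplitK (inr j)). Qed.

Lemma mdeg_gam n (a b : 'I_n -> nat) :
  mdeg (gam a b) = (\sum_(j < n) a j + \sum_(j < n) b j)%N.
Proof.
rewrite mdeg_split; congr (_ + _)%N; apply eq_bigr => j _.
  exact: gam_l. exact: gam_r.
Qed.

Definition gE n (g : gen n) : 'X_{1..n + n} :=
  match g with Cr j => U_(lshift n j) | An j => U_(rshift n j) end.

Lemma gen_valE (C : numClosedFieldType) n (g : gen n) : gen_val C g = 'X_[gE g].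
Proof. by case: g. Qed.

Lemma mcr_gE n (g : gen n) j :
  mcr (gE g) j = (if g is Cr i then i == j else false).
Proof. by case: g => i; rewrite /mcr /= mnm1E ?eq_lshift ?eq_rlshift. Qed.
Lemma man_gE n (g : gen n) j :
  man (gE g) j = (if g is An i then i == j else false).
Proof. by case: g => i; rewrite /man /= mnm1E ?eq_rshift ?eq_lrshift. Qed.

Lemma mdeg_gE n (g : gen n) : mdeg (gE g) = 1%N.
Proof. by case: g => i; rewrite /= mdeg1. Qed.

Lemma gam_cons n (g : gen n) (m : seq (gen n)) :
  gam (mdeg_cr (g :: m)) (mdeg_an (g :: m)) = (gE g + gam (mdeg_cr m) (mdeg_an m))%MM.
Proof.
apply/mnmP => i; rewrite mnmDE -[i]splitK; case: (split i) => j /=.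
  move: (gam_l (mdeg_cr (g::m)) (mdeg_an (g::m)) j) (gam_l (mdeg_cr m) (mdeg_an m) j) (mcr_gE g j).
  by rewrite /mcr => -> -> ->; case: g.
move: (gam_r (mdeg_cr (g::m)) (mdeg_an (g::m)) j) (gam_r (mdeg_cr m) (mdeg_an m) j) (man_gE g j).
by rewrite /man => -> -> ->; case: g.
Qed.

Lemma gam_nil n : gam (@mdeg_cr n [::]) (mdeg_an [::]) = 0%MM.
Proof. by apply/mnmP => i; rewrite /gam mnmE mnm0E; case: split. Qed.

Lemma WV (C : numClosedFieldType) n (m : seq (gen n)) :
  let P := word_val C m in let g0 := gam (mdeg_cr m) (mdeg_an m) in
  [/\ P@_g0 = 1,
      (forall w, w != g0 -> (mdeg g0 <= mdeg w)%N -> P@_w = 0) &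
      (forall w, P@_w != 0 -> forall j, (mcr w j + mdeg_an m j = man w j + mdeg_cr m j)%N)].
Proof.
elim: m => [|g m IH] /=.
  rewrite gam_nil mcoeff1 eqxx; split => //.
    by move=> w hw _; rewrite mcoeff1 (negbTE hw).
  move=> w; rewrite mcoeff1; case: (eqVneq w 0%MM) => [->|ne]; last by rewrite /= mulr0n eqxx.
  by move=> _ j; rewrite /mcr /man !mnm0E.
case: IH => Ha Hb Hc.
set P := word_val C m; set g0 := gam (mdeg_cr m) (mdeg_an m).
have lt_g0 : forall v, v \in msupp P -> v != g0 -> (mdeg v < mdeg g0)%N.
  move=> v hv nv; rewrite ltnNge; apply/negP => h.
  by move: hv; rewrite mcoeff_msupp (Hb v nv h) eqxx.
have hg0 : g0 \in msupp P by rewrite mcoeff_msupp Ha oner_neq0.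
rewrite gam_cons gen_valE; split.
- rewrite wmulX_coef (bigD1_seq g0) ?msupp_uniq //= Ha mul1r mm_top.
  rewrite big1_seq ?addr0 // => v /andP [nv hv].
  rewrite (mm_hb C) ?mulr0 // mdegD ltn_add2l; exact: lt_g0.
- move=> w hw hdeg; rewrite wmulX_coef big1_seq // => v /andP [_ hv].
  have [->|nv] := eqVneq v g0.
    rewrite (mm_next C hw) ?mulr0 //; move: hdeg; rewrite mdegD => h.
    exact: leqW.
  rewrite (mm_hb C) ?mulr0 //; move: hdeg; rewrite mdegD => h.
  apply: leq_trans h; rewrite ltn_add2l; exact: lt_g0.
- move=> w; rewrite wmulX_coef => /(sum_neq0 (C:=C)) [v hv].
  rewrite mulf_eq0 negb_or => /andP [hPv hmm] j.
  have h1 := mm_charge hmm j; have h2 := Hc v hPv j.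
  move: h1 h2; rewrite mcr_gE man_gE.
  clear hmm; by case: g => i /=; case: (i == j) => /=; lia.
Qed.

Lemma wdeg_some (C : numClosedFieldType) n (P : W C n) w0 :
  P@_w0 != 0 -> (forall w, (mdeg w0 < mdeg w)%N -> P@_w = 0) ->
  wdeg P = Some (mdeg w0).
Proof.
move=> h0 h; rewrite /wdeg.
have nz : P != 0 by apply: contraNneq h0 => ->; rewrite mcoeff0.
rewrite (negbTE nz); congr Some.
suff -> : msize P = (mdeg w0).+1 by [].
apply/eqP; rewrite eqn_leq; apply/andP; split.
  rewrite msizeE; apply/bigmax_leqP_seq => u hu _; rewrite ltnS leqNgt; apply/negP => /h e.
  by move: hu; rewrite mcoeff_msupp e eqxx.
by apply: msize_mdeg_lt; rewrite mcoeff_msupp.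
Qed.

Lemma wdeg_lt_of (C : numClosedFieldType) n (P : W C n) d :
  (forall w, (d <= mdeg w)%N -> P@_w = 0) -> wdeg_lt P d.
Proof.
move=> h; rewrite /wdeg_lt /wdeg; case: ifP => // /negbT nz.
have hs : (msize P <= d)%N.
  rewrite msizeE; apply/bigmax_leqP_seq => u hu _; rewrite leqNgt; apply/negP.
  rewrite ltnS => /h e.
  by move: hu; rewrite mcoeff_msupp e eqxx.
have hp : (0 < msize P)%N by rewrite lt0n msize_poly_eq0.
lia.
Qed.

Lemma gam_ext n (a b a' b' : 'I_n -> nat) : a =1 a' -> b =1 b' -> gam a b = gam a' b'.
Proof. by move=> ha hb; apply/mnmP => i; rewrite /gam !mnmE; case: split. Qed.

Lemma adj_cr n (m : seq (gen n)) j : mdeg_cr (word_adj m) j = mdeg_an m j.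
Proof. by rewrite /mdeg_cr /mdeg_an /word_adj count_rev count_map; apply eq_count => -[]. Qed.
Lemma adj_an n (m : seq (gen n)) j : mdeg_an (word_adj m) j = mdeg_cr m j.
Proof. by rewrite /mdeg_cr /mdeg_an /word_adj count_rev count_map; apply eq_count => -[]. Qed.

Lemma sum_minus1 n (x : 'I_n -> nat) j0 : (0 < x j0)%N ->
  (\sum_(i < n) (x i - (i == j0)) + 1 = \sum_(i < n) x i)%N.
Proof.
move=> h; rewrite (bigD1 j0) //= [RHS](bigD1 j0) //= eqxx.
have -> : (\sum_(i < n | i != j0) (x i - (i == j0)) = \sum_(i < n | i != j0) x i)%N.
  by apply eq_bigr => i /negbTE ->; rewrite subn0.
have e : (x j0 - true = x j0 - 1)%N by [].
rewrite e; set s := (\sum_(i < n | i != j0) x i)%N. lia.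
Qed.

Lemma comm_top (C : numClosedFieldType) n (A B : W C n) (gA gB : 'X_{1..n + n}) D w :
  (0 < D)%N -> mdeg gA = D -> mdeg gB = D ->
  A@_gA = 1 -> (forall w, w != gA -> (D <= mdeg w)%N -> A@_w = 0) ->
  B@_gB = 1 -> (forall w, w != gB -> (D <= mdeg w)%N -> B@_w = 0) ->
  (D + D <= (mdeg w).+2)%N ->
  (wcomm A B)@_w = \sum_(j < n) (DD j (gA + gB)%MM == w)%:R *
      ((man gA j * mcr gB j)%:R - (man gB j * mcr gA j)%:R).
Proof.
move=> hD dA dB HaA HbA HaB HbB hw.
have hbL : forall (P : W C n) g, mdeg g = D -> P@_g = 1 ->
    (forall w, w != g -> (D <= mdeg w)%N -> P@_w = 0) -> hb (P - 'X_[g]) D.-1.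
  move=> P g dg Pa Pb u hu; rewrite mcoeffB mcoeffX.
  have [e|ne] := eqVneq g u; first by rewrite -e Pa subrr.
  by rewrite Pb 1?eq_sym // ?subr0 //; lia.
have hbX : forall g, mdeg g = D -> hb ('X_[g] : W C n) D.
  move=> g dg u hu; rewrite mcoeffX; case: eqP => // e; by move: hu; rewrite -e dg ltnn.
have -> : wcomm A B = wcomm (A - 'X_[gA]) (B - 'X_[gB]) + wcomm (A - 'X_[gA]) 'X_[gB]
   + (wcomm 'X_[gA] (B - 'X_[gB]) + wcomm 'X_[gA] 'X_[gB]).
  by rewrite -!wcommDr -wcommDl !subrK.
have e1 := wcomm_low (hbL _ _ dA HaA HbA) (hbL _ _ dB HaB HbB) (ltac:(lia) : (D.-1 + D.-1 < (mdeg w).+2)%N).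
have e2 := wcomm_low (hbL _ _ dA HaA HbA) (hbX _ dB) (ltac:(lia) : (D.-1 + D < (mdeg w).+2)%N).
have e3 := wcomm_low (hbX _ dA) (hbL _ _ dB HaB HbB) (ltac:(lia) : (D + D.-1 < (mdeg w).+2)%N).
rewrite (mcoeffD w (wcomm (A - 'X_[gA]) (B - 'X_[gB]) + wcomm (A - 'X_[gA]) 'X_[gB])).
rewrite (mcoeffD w (wcomm (A - 'X_[gA]) (B - 'X_[gB]))) (mcoeffD w (wcomm 'X_[gA] (B - 'X_[gB]))).
rewrite e1 e2 e3.
rewrite !add0r /wcomm !wmulX mcoeffB mm_comm_top //.
by rewrite dA dB.
Qed.

Lemma main_nd (C : numClosedFieldType) (n : nat) (m : seq (gen n)) j0 :
  let gp := gplus C m in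
  let gm := gminus C m in
  let al := mdeg_cr m in
  let be := mdeg_an m in
  al j0 != be j0 ->
  wcomm gp gm != 0 /\
   exists dp dm d : nat,
     wdeg gp = Some dp /\ wdeg gm = Some dm /\
     wdeg (wcomm gp gm) = Some d /\ (d + 2 = dp + dm)%N /\
     wdeg_lt
       (wcomm gp gm +
        (2 * 'i) *: \sum_(k < n)
           ((((al k) ^ 2)%:R - ((be k) ^ 2)%:R) *:
              nbasis C (fun j => al j + be j - (j == k))%N
                       (fun j => al j + be j - (j == k))%N))
       d.
Proof.
move=> gp gm al be hj0.
set A := word_val C (word_adj m); set B := word_val C m.
have egp : gp = 'i *: (A + B) by [].
have egm : gm = A - B by [].
have := WV C m; rewrite /= => -[HaB HbB HcB].
have := WV C (word_adj m); rewrite /= => -[HaA0 HbA0 _].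
have eg : gam (mdeg_cr (word_adj m)) (mdeg_an (word_adj m)) = gam be al.
  exact: gam_ext (adj_cr m) (adj_an m).
rewrite eg in HaA0 HbA0.
rewrite -/al -/be -/B in HaB HbB.
set gA := gam be al in HaA0 HbA0; set gB := gam al be in HaB HbB.
set D := mdeg gB.
have dB : mdeg gB = D by [].
have dA : mdeg gA = D by rewrite /D !mdeg_gam addnC.
have x0 : (0 < al j0 + be j0)%N.
  by rewrite lt0n addn_eq0; apply: contra hj0 => /andP [/eqP -> /eqP ->].
have hD : (0 < D)%N by rewrite /D mdeg_gam -big_split (bigD1 j0) //=; lia.
have gAB : gA != gB.
  apply/eqP => e; move: (congr1 (fun u => mcr u j0) e) => /=; rewrite !gam_l => e'.
  by rewrite e' eqxx in hj0.
have HbA : forall w, w != gA -> (D <= mdeg w)%N -> A@_w = 0.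
  by move=> w h1 h2; apply: HbA0 => //; rewrite dA.
have hbA : hb A D.
  move=> w hw; apply: HbA; last exact: ltnW.
  by apply/eqP => e; move: hw; rewrite e dA ltnn.
have hbB : hb B D.
  move=> w hw; apply: HbB; last exact: ltnW.
  by apply/eqP => e; move: hw; rewrite e dB ltnn.
have A_gB : A@_gB = 0 by apply: HbA; [rewrite eq_sym | rewrite dB].
have wgp : wdeg gp = Some D.
  rewrite egp /D; apply: wdeg_some.
    by rewrite mcoeffZ mcoeffD A_gB HaB add0r mulr1 neq0Ci.
  by move=> w hw; rewrite mcoeffZ mcoeffD hbA // hbB // addr0 mulr0.
have wgm : wdeg gm = Some D.
  rewrite egm /D; apply: wdeg_some.
    by rewrite mcoeffB A_gB HaB sub0r oppr_eq0 oner_neq0.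
  by move=> w hw; rewrite mcoeffB hbA // hbB // subr0.
pose dl' (j : 'I_n) := gam (fun i => al i + be i - (i == j))%N (fun i => al i + be i - (i == j))%N.
pose cc (j : 'I_n) : C := ((al j * al j)%:R - (be j * be j)%:R).
have DDe : forall j, DD j (gA + gB)%MM = dl' j.
  move=> j; apply/mnmP => i; rewrite /DD /dl' /gA /gB /gam !mnmE.
  rewrite -[i]splitK; case: (split i) => k /=.
    by rewrite sp_l !(unsplitK (inl k)) addnC.
  by rewrite sp_r !(unsplitK (inr k)) addnC.
have CF : forall w, (D + D <= (mdeg w).+2)%N ->
    (wcomm gp gm)@_w = 'i * (- (\sum_(j < n) (dl' j == w)%:R * cc j) *+ 2).
  move=> w hw; rewrite egp egm gcomm_eq mcoeffZ.
  have -> : wmul B A - wmul A B = - wcomm A B by rewrite /wcomm opprB.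
  rewrite mcoeffMn mcoeffN (comm_top hD dA dB HaA0 HbA HaB HbB hw).
  congr (_ * ((- _) *+ 2)); apply eq_bigr => j _.
  by rewrite DDe /cc !gam_l !gam_r.
pose x (i : 'I_n) := (al i + be i)%N.
have mdl : forall j, (0 < x j)%N -> (mdeg (dl' j) + 2 = D + D)%N.
  move=> j hj; rewrite /dl' /D !mdeg_gam.
  have := sum_minus1 hj; rewrite /x big_split /=; lia.
have dl_ne : forall j, j != j0 -> dl' j != dl' j0.
  move=> j hj; apply/eqP => e; move: (congr1 (fun u => mcr u j0) e) => /=.
  rewrite !gam_l eqxx eq_sym (negbTE hj) subn0 => e'.
  have e'' : (al j0 + be j0 - true = al j0 + be j0 - 1)%N by [].
  by move: e'; rewrite e''; lia.
have cc0 : forall j, x j = 0%N -> cc j = 0.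
  by move=> j /eqP; rewrite /x /cc addn_eq0 => /andP [/eqP -> /eqP ->]; rewrite subrr.
set d := mdeg (dl' j0).
have hd : (d + 2 = D + D)%N by apply: mdl.
have Sj0 : \sum_(j < n) (dl' j == dl' j0)%:R * cc j = cc j0.
  rewrite (bigD1 j0) //= eqxx mul1r big1 ?addr0 // => j hj.
  by rewrite (negbTE (dl_ne j hj)) mul0r.
have cc_nz : cc j0 != 0.
  rewrite /cc subr_eq0 eqr_nat !mulnn eqn_exp2r //.
have top_nz : (wcomm gp gm)@_(dl' j0) != 0.
  rewrite CF; last by rewrite -/d; lia.
  rewrite Sj0 mulf_neq0 ?neq0Ci // mulNrn oppr_eq0 -mulr_natr mulf_neq0 //.
  by rewrite pnatr_eq0.
split.
  by apply: contraNneq top_nz => ->; rewrite mcoeff0.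
exists D, D, d; do 3 (split => //).
  apply: wdeg_some => // w hw.
  rewrite CF; last by lia.
  rewrite big1 ?oppr0 ?mul0rn ?mulr0 // => j _.
  have [hx|hx] := posnP (x j); first by rewrite cc0 // mulr0.
  case: eqP => [e|]; last by rewrite mul0r.
  by move: (mdl j hx) hw; rewrite e -/d; lia.
split; first by lia.
apply: wdeg_lt_of => w hw.
have hw' : (D + D <= (mdeg w).+2)%N by lia.
have eT : (\sum_(k < n) ((((al k) ^ 2)%:R - ((be k) ^ 2)%:R) *:
              nbasis C (fun j => al j + be j - (j == k))%N
                       (fun j => al j + be j - (j == k))%N))@_w
   = \sum_(j < n) (dl' j == w)%:R * cc j.
  rewrite raddf_sum; apply eq_bigr => k _.
  by rewrite /= mcoeffZ /nbasis mcoeffX /cc -!mulnn mulrC.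
rewrite mcoeffD mcoeffZ eT CF //.
ring.
Qed.

Theorem lemma8 (C : numClosedFieldType) (n : nat) (m : seq (gen n)) :
  let gp := gplus C m in
  let gm := gminus C m in
  let al := mdeg_cr m in
  let be := mdeg_an m in
  (wcomm gp gm = 0 <-> (forall j, al j = be j)) /\
  (wcomm gp gm <> 0 ->
   exists dp dm d : nat,
     wdeg gp = Some dp /\ wdeg gm = Some dm /\
     wdeg (wcomm gp gm) = Some d /\ (d + 2 = dp + dm)%N /\
     wdeg_lt
       (wcomm gp gm +
        (2 * 'i) *: \sum_(k < n)
           ((((al k) ^ 2)%:R - ((be k) ^ 2)%:R) *:
              nbasis C (fun j => al j + be j - (j == k))%N
                       (fun j => al j + be j - (j == k))%N))
       d).
Proof.
move=> gp gm al be.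
have diag_case : (forall j, al j = be j) -> wcomm gp gm = 0.
  move=> hab.
  have := WV C m; rewrite /= => -[_ _ HcB].
  have := WV C (word_adj m); rewrite /= => -[_ _ HcA].
  have dB : forall w, (word_val C m)@_w != 0 -> forall j, mcr w j = man w j.
    by move=> w hw j; move: (HcB w hw j); rewrite -/al -/be (hab j); lia.
  have dA : forall w, (word_val C (word_adj m))@_w != 0 -> forall j, mcr w j = man w j.
    by move=> w hw j; move: (HcA w hw j); rewrite adj_cr adj_an -/al -/be (hab j); lia.
  apply: wcomm_diag.
    move=> w; rewrite /gp /gplus mcoeffZ mcoeffD mulf_eq0 negb_or => /andP [_ h].
    have [e|ne] := eqVneq ((word_val C (word_adj m))@_w) 0.
      by apply: dB; move: h; rewrite e add0r.
    exact: dA.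
  move=> w; rewrite /gm /gminus mcoeffB => h.
  have [e|ne] := eqVneq ((word_val C (word_adj m))@_w) 0.
    by apply: dB; move: h; rewrite e sub0r oppr_eq0.
  exact: dA.
split; first split.
- move=> h0 j; case: (boolP [forall j, al j == be j]) => [/forallP h|].
    exact/eqP/h.
  rewrite negb_forall => /existsP [j0 hj0].
  by have [hne _] := main_nd C hj0; rewrite h0 eqxx in hne.
- exact: diag_case.
move=> hne; case: (boolP [forall j, al j == be j]) => [/forallP h|].
  by exfalso; apply: hne; apply: diag_case => j; apply/eqP/h.
rewrite negb_forall => /existsP [j0 hj0].
by have [_ ex] := main_nd C hj0.
Qed.
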